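(* Let $\lambda\in\Lambda$ and $z\in\mathbb C_p$. (i) If $\rho<|z|<1$, then $|Q_\lambda(z)|=p|z|^p>|z|$. (ii) If $|z|\le\rho$, then $|Q_\lambda(z)|\le\rho$. (iii) If $|z-1|<1$, then $|Q_\lambda(z)-1|=p|z-1|$. (iv) If $1<|z|<\hat r$, then $|Q_\lambda(z)|=p|z|^{p+1}$.
   Context: Let $p$ be a prime, $\mathbb C_p$ with $p$-adic absolute value, $|p|=1/p$. $\Lambda=\{\lambda\in\mathbb C_p:|\lambda-1|<1\}$, $P_\lambda(z)=\frac{\lambda}{p}z^p+\left(1-\frac{\lambda}{p}\right)z^{p+1}$, $\rho=p^{-1/(p-1)}$. Fix $\hat r\in|\mathbb C_p^*|$, $\hat r>1$, $B=\{z:|z|\le\hat r\}$; $\mathcal H(B)$ is the ring of power series $\sum a_iz^i$ convergent on $B$ with norm $\|f\|_B=\sup_i|a_i|\hat r^{\,i}$. Fix $Q\in\mathcal H(B)$ with $\|Q\|_B<\rho$, $Q^*_\lambda=P_\lambda+Q$, and let $h(\lambda)$ be the unique fixed point of $Q^*_\lambda$ in $\{z:|z-1|\le|Q(1)|/p\}$. Define $Q_\lambda(z)=P_\lambda(z+h(\lambda)-1)+Q(z+h(\lambda)-1)+1-h(\lambda)$ for $z\in B$ (the conjugate of $Q^*_\lambda$ by $A_\lambda(z)=z+h(\lambda)-1$). *)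

(* Defs.v *)
From mathcomp Require Import all_boot all_order all_algebra.
From mathcomp Require Import reals exp.
Set Implicit Arguments. Unset Strict Implicit. Unset Printing Implicit Defensive.
Import Order.TTheory GRing.Theory Num.Theory.
Local Open Scope ring_scope.

Definition abs_cvg (R : realType) (K : fieldType) (abs : K -> R)
  (u : nat -> K) (l : K) : Prop :=
  forall e : R, 0 < e -> exists N : nat, forall n, (N <= n)%N -> abs (u n - l) < e.

Definition abs_cauchy (R : realType) (K : fieldType) (abs : K -> R)
  (u : nat -> K) : Prop :=
  forall e : R, 0 < e -> exists N : nat, forall m n, (N <= m)%N -> (N <= n)%N ->
    abs (u m - u n) < e.

(* abs is a complete non-archimedean absolute value on K with |p| = 1/p.
   Together with K algebraically closed, this is the structure of C_p. *)
Definition is_Cp_abs (R : realType) (p : nat) (K : closedFieldType)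
  (abs : K -> R) : Prop :=
  (forall x, 0 <= abs x) /\
  (forall x, abs x = 0 <-> x = 0) /\
  (forall x y, abs (x * y) = abs x * abs y) /\
  (forall x y, abs (x + y) <= Num.max (abs x) (abs y)) /\
  abs (p%:R) = (p%:R)^-1 /\
  (forall u, abs_cauchy abs u -> exists l, abs_cvg abs u l).

Definition rho (R : realType) (p : nat) : R :=
  powR ((p%:R)^-1) ((p.-1)%:R)^-1.

Definition Plam (K : fieldType) (p : nat) (lam z : K) : K :=
  lam / p%:R * z ^+ p + (1 - lam / p%:R) * z ^+ p.+1.

Definition Qstar (K : fieldType) (p : nat) (Qf : K -> K) (lam z : K) : K :=
  Plam p lam z + Qf z.

Definition Qlam (K : fieldType) (p : nat) (Qf : K -> K) (h : K -> K)
  (lam z : K) : K :=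
  Plam p lam (z + h lam - 1) + Qf (z + h lam - 1) + 1 - h lam.

(* Main.v *)
Require Import Defs.
From mathcomp Require Import all_boot all_order all_algebra.
From mathcomp Require Import reals exp.
From mathcomp Require Import ring lra zify.
Set Implicit Arguments. Unset Strict Implicit. Unset Printing Implicit Defensive.
Import Order.TTheory GRing.Theory Num.Theory.
Local Open Scope ring_scope.

Definition UA (R : realType) (K : fieldType) (abs : K -> R) : Prop :=
  (forall x, 0 <= abs x) /\
  (forall x, abs x = 0 <-> x = 0) /\
  (forall x y, abs (x * y) = abs x * abs y) /\
  (forall x y, abs (x + y) <= Num.max (abs x) (abs y)).
Unset Implicit Arguments.


Lemma ua_ge0 {R : realType} {K : fieldType} {abs : K -> R} : UA abs -> forall x, 0 <= abs x.
Proof. by case. Qed.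
Lemma ua_M {R : realType} {K : fieldType} {abs : K -> R} : UA abs -> forall x y, abs (x * y) = abs x * abs y.
Proof. by case=> _ [_ []]. Qed.
Lemma ua_D {R : realType} {K : fieldType} {abs : K -> R} : UA abs -> forall x y, abs (x + y) <= Num.max (abs x) (abs y).
Proof. by case=> _ [_ [_]]. Qed.
Lemma ua_0 {R : realType} {K : fieldType} {abs : K -> R} : UA abs -> abs 0 = 0.
Proof. by case=> _ [H _]; apply/H. Qed.
Lemma ua_eq0 {R : realType} {K : fieldType} {abs : K -> R} : UA abs -> forall x, abs x = 0 -> x = 0.
Proof. by case=> _ [H _] x /H. Qed.

Lemma ua_1 {R : realType} {K : fieldType} {abs : K -> R} : UA abs -> abs 1 = 1.
Proof.
move=> H; have := ua_M H 1 1; rewrite mulr1 => E.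
have N : abs 1 != 0 by apply/eqP => /(ua_eq0 H)/eqP; rewrite oner_eq0.
by apply: (mulfI N); rewrite mulr1 -E.
Qed.

Lemma ua_N {R : realType} {K : fieldType} {abs : K -> R} : UA abs -> forall x, abs (- x) = abs x.
Proof.
move=> H x; have E1 : abs (-1) = 1.
  have := ua_M H (-1) (-1); rewrite mulrNN mulr1 ua_1 // => E.
  have g := ua_ge0 H (-1).
  have : (abs (-1) - 1) * (abs (-1) + 1) = 0.
    have -> : (abs (-1) - 1) * (abs (-1) + 1) = abs (-1) * abs (-1) - 1 by ring.
    by rewrite -E subrr.
  by move/eqP; rewrite mulf_eq0 => /orP[/eqP|/eqP]; lra.
by rewrite -mulN1r ua_M // E1 mul1r.
Qed.

Lemma ua_X {R : realType} {K : fieldType} {abs : K -> R} : UA abs -> forall x n, abs (x ^+ n) = abs x ^+ n.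
Proof.
move=> H x; elim=> [|n IH]; first by rewrite !expr0 ua_1.
by rewrite !exprS ua_M // IH.
Qed.

Lemma ua_le {R : realType} {K : fieldType} {abs : K -> R} : UA abs -> forall x y B,
  abs x <= B -> abs y <= B -> abs (x + y) <= B.
Proof.
move=> H x y B hx hy; apply: le_trans (ua_D H x y) _.
by rewrite ge_max hx hy.
Qed.

Lemma ua_lt {R : realType} {K : fieldType} {abs : K -> R} : UA abs -> forall x y B,
  abs x < B -> abs y < B -> abs (x + y) < B.
Proof.
move=> H x y B hx hy; apply: le_lt_trans (ua_D H x y) _.
by rewrite gt_max hx hy.
Qed.

Lemma ua_strict {R : realType} {K : fieldType} {abs : K -> R} : UA abs -> forall x y,
  abs x < abs y -> abs (x + y) = abs y.
Proof.
move=> H x y hxy; apply/eqP; rewrite eq_le; apply/andP; split.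
  by apply: ua_le => //; exact: ltW.
have := ua_D H (x + y) (- x); rewrite addrC addKr ua_N //.
rewrite le_max => /orP[]//; lra.
Qed.

Lemma ua_sum {R : realType} {K : fieldType} {abs : K -> R} : UA abs -> forall (f : nat -> K) B n,
  0 <= B -> (forall i, abs (f i) <= B) -> abs (\sum_(i < n) f i) <= B.
Proof.
move=> H f B n B0 hf; elim: n => [|n IH]; first by rewrite big_ord0 ua_0.
by rewrite big_ord_recr /=; apply: ua_le.
Qed.

Lemma ua_cvg_le {R : realType} {K : fieldType} {abs : K -> R} : UA abs -> forall s l B,
  abs_cvg abs s l -> (forall n, abs (s n) <= B) -> abs l <= B.
Proof.
move=> H s l B hc hs; rewrite leNgt; apply/negP => hl.
have B0 : 0 <= B by apply: le_trans (hs 0%N); exact: ua_ge0.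
have [N hN] := hc (abs l) (le_lt_trans B0 hl).
have := ua_D H (s N) (l - s N); rewrite addrC subrK -opprB ua_N //.
move: (hN N (leqnn N)) (hs N) => a b; rewrite le_max => /orP[]; lra.
Qed.

Lemma ua_cvgB {R : realType} {K : fieldType} {abs : K -> R} : UA abs -> forall s t l m,
  abs_cvg abs s l -> abs_cvg abs t m ->
  abs_cvg abs (fun n => s n - t n) (l - m).
Proof.
move=> H s t l m hs ht e e0.
have [N1 h1] := hs e e0; have [N2 h2] := ht e e0.
exists (maxn N1 N2) => n hn.
have -> : s n - t n - (l - m) = (s n - l) + - (t n - m) by ring.
apply: ua_lt => //; rewrite ?ua_N //.
  by apply: h1; apply: leq_trans hn; exact: leq_maxl.
by apply: h2; apply: leq_trans hn; exact: leq_maxr.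
Qed.

Lemma ua_XB {R : realType} {K : fieldType} {abs : K -> R} : UA abs -> forall x y n,
  abs x <= 1 -> abs y <= 1 -> abs (x ^+ n - y ^+ n) <= abs (x - y).
Proof.
move=> H x y n hx hy; elim: n => [|n IH].
  by rewrite !expr0 subrr ua_0 // ua_ge0.
have -> : x ^+ n.+1 - y ^+ n.+1 = x * (x ^+ n - y ^+ n) + (x - y) * y ^+ n.
  by rewrite !exprS; ring.
apply: ua_le => //; rewrite (ua_M H) ?(ua_X H) //.
  have := ua_ge0 H (x ^+ n - y ^+ n); have := ua_ge0 H x; nra.
by apply: ler_piMr; [exact: ua_ge0 | apply: exprn_ile1 => //; exact: ua_ge0].
Qed.
Lemma rho_gt0 (R : realType) p : (1 < p)%N -> 0 < rho R p.
Proof. move=> hp; apply: powR_gt0; rewrite invr_gt0 ltr0n; lia. Qed.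

Lemma rho_pow (R : realType) p : (1 < p)%N -> rho R p ^+ p.-1 = (p%:R : R)^-1.
Proof.
move=> hp; rewrite /rho -powR_mulrn ?powR_ge0 // -powRrM mulVf.
  by rewrite powRr1 // invr_ge0 ler0n.
by rewrite pnatr_eq0; lia.
Qed.

Lemma Q_bound (R : realType) (K : fieldType) (abs : K -> R) (a : nat -> K)
  (rhat c : R) (q z : K) : UA abs ->
  (forall i, abs (a i) * rhat ^+ i <= c) -> 0 <= c -> abs z <= rhat ->
  abs_cvg abs (fun n => \sum_(i < n) a i * z ^+ i) q -> abs q <= c.
Proof.
move=> H ha c0 hz hc; apply: (ua_cvg_le H _ q c hc) => n /=.
apply: (ua_sum H (fun i => a i * z ^+ i) c n) => // i.
rewrite (ua_M H) (ua_X H); apply: le_trans (ha i).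
apply: ler_wpM2l; first exact: (ua_ge0 H).
by apply: lerXn2r => //; rewrite nnegrE ?(ua_ge0 H) //; apply: le_trans hz; exact: (ua_ge0 H).
Qed.

Lemma Q_diff (R : realType) (K : fieldType) (abs : K -> R) (a : nat -> K)
  (c : R) (qw qh w h : K) : UA abs ->
  (forall i, abs (a i) <= c) -> 0 <= c -> abs w <= 1 -> abs h <= 1 ->
  abs_cvg abs (fun n => \sum_(i < n) a i * w ^+ i) qw ->
  abs_cvg abs (fun n => \sum_(i < n) a i * h ^+ i) qh ->
  abs (qw - qh) <= c * abs (w - h).
Proof.
move=> H ha c0 hw hh cw ch.
apply: (ua_cvg_le H _ _ _ (ua_cvgB H _ _ _ _ cw ch)) => n /=.
rewrite -sumrB.
have -> : \sum_(i < n) (a i * w ^+ i - a i * h ^+ i) =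
          \sum_(i < n) (fun j => a j * (w ^+ j - h ^+ j)) i.
  by apply: eq_bigr => i _; ring.
apply: (ua_sum H (fun j => a j * (w ^+ j - h ^+ j))).
  by apply: mulr_ge0 => //; exact: (ua_ge0 H).
move=> i; rewrite (ua_M H); apply: ler_pM; rewrite ?(ua_ge0 H) //.
exact: (ua_XB H).
Qed.
Theorem lemma3p5 (R : realType) (p : nat) (K : closedFieldType)
  (abs : K -> R) (rhat : R) (a : nat -> K) (Qf : K -> K) (h : K -> K) :
  prime p ->
  is_Cp_abs p abs ->
  (* rhat in |C_p^*| and rhat > 1 *)
  (exists w : K, w != 0 /\ abs w = rhat) -> 1 < rhat ->
  (* Q = sum a_i z^i lies in H(B): |a_i| rhat^i -> 0 *)
  (forall e : R, 0 < e -> exists N : nat, forall i, (N <= i)%N ->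
      abs (a i) * rhat ^+ i < e) ->
  (* ||Q||_B = sup_i |a_i| rhat^i < rho *)
  (exists c : R, c < rho R p /\ forall i, abs (a i) * rhat ^+ i <= c) ->
  (* Qf is the function z |-> sum_i a_i z^i on B *)
  (forall z, abs z <= rhat ->
      abs_cvg abs (fun n => \sum_(i < n) a i * z ^+ i) (Qf z)) ->
  (* h(lambda) is the unique fixed point of Q^*_lambda in |z-1| <= |Q(1)|/p *)
  (forall lam, abs (lam - 1) < 1 ->
      [/\ abs (h lam - 1) <= abs (Qf 1) / p%:R,
          Qstar p Qf lam (h lam) = h lam
        & forall y, abs (y - 1) <= abs (Qf 1) / p%:R ->
            Qstar p Qf lam y = y -> y = h lam]) ->
  forall lam z : K, abs (lam - 1) < 1 ->
  [/\ (rho R p < abs z -> abs z < 1 ->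
         abs (Qlam p Qf h lam z) = p%:R * abs z ^+ p /\
         abs z < abs (Qlam p Qf h lam z)),
      (abs z <= rho R p -> abs (Qlam p Qf h lam z) <= rho R p),
      (abs (z - 1) < 1 -> abs (Qlam p Qf h lam z - 1) = p%:R * abs (z - 1))
    & (1 < abs z -> abs z < rhat ->
         abs (Qlam p Qf h lam z) = p%:R * abs z ^+ p.+1)].
Proof.
move=> pr [h0 [heq0 [hM [hD [hp _]]]]] _ rhat1 _ [c [crho hc]] hQ hfix lam z hlam.
have H : UA abs by split.
have p2 : (1 < p)%N := prime_gt1 pr.
have q2 : (2 : R) <= p%:R by rewrite ler_nat.
have qi0 : 0 < (p%:R : R)^-1 by rewrite invr_gt0; lra.
have qqi : (p%:R : R) * p%:R^-1 = 1 by rewrite mulfV //; apply/eqP => E; lra.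
have qi1 : (p%:R : R)^-1 < 1 by rewrite invf_lt1; lra.
have qK0 : (p%:R : K) != 0.
  by apply/eqP => E; move: hp; rewrite E (ua_0 H) => E2; lra.
have absqi : abs ((p%:R : K)^-1) = p%:R.
  have := hM (p%:R) (p%:R^-1); rewrite mulfV // (ua_1 H) hp => E.
  have : (p%:R : R)^-1 * (abs (p%:R^-1) - p%:R) = 0.
    by rewrite mulrBr -E mulrC qqi subrr.
  by move/eqP; rewrite mulf_eq0 subr_eq0 invr_eq0 => /orP[/eqP|/eqP]; lra.
have abslam : abs lam = 1.
  have -> : lam = (lam - 1) + 1 by ring.
  by rewrite (ua_strict H) ?(ua_1 H).
have absl : abs (lam / p%:R) = p%:R by rewrite hM abslam absqi mul1r.
have absl1 : abs (1 - lam / p%:R) = p%:R.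
  by rewrite (ua_strict H) (ua_N H) // (ua_1 H) absl; lra.
set r := rho R p.
have r0 : 0 < r by apply: rho_gt0.
have rpow : r ^+ p.-1 = (p%:R : R)^-1 by apply: rho_pow.
have r1 : r < 1.
  rewrite ltNge; apply/negP => hr; have := exprn_ege1 p.-1 hr.
  rewrite rpow; lra.
have rp : r ^+ p = r * (p%:R : R)^-1 by rewrite -rpow -exprS prednK // prime_gt0.
have c0 : 0 <= c by have := hc 0%N; rewrite expr0 mulr1; have := h0 (a 0%N); lra.
have hai : forall i, abs (a i) <= c.
  move=> i; apply: le_trans (hc i); apply: ler_peMr; first exact: h0.
  by apply: exprn_ege1; lra.
have hQw : forall w, abs w <= rhat -> abs (Qf w) <= c.
  by move=> w hw; exact: (Q_bound R K abs a rhat c (Qf w) w H hc c0 hw (hQ w hw)).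
have hQ1 : abs (Qf 1) <= c by apply: hQw; rewrite (ua_1 H); lra.
have Plf : forall x, Plam p lam x = x ^+ p * (lam / p%:R + x * (1 - lam / p%:R)).
  by move=> x; rewrite /Plam exprS; ring.
have EQ : Qlam p Qf h lam z =
    Plam p lam (z + h lam - 1) + (Qf (z + h lam - 1) + (1 - h lam)).
  by rewrite /Qlam; ring.
have [hh1 hfp _] := hfix lam hlam.
rewrite EQ {EQ}; move: (h lam) hh1 hfp => hl hh1 hfp.
have hl1 : abs (hl - 1) < r.
  apply: le_lt_trans hh1 _; apply: le_lt_trans crho.
  apply: (@le_trans _ _ (c / p%:R)); first by apply: ler_wpM2r; lra.
  by apply: ler_piMr => //; lra.
have hl1' : abs (1 - hl) < r by rewrite -opprB (ua_N H).
have [w wE] : exists w, w = z + hl - 1 by eexists.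
rewrite -wE.
have rest : abs w <= rhat -> abs (Qf w + (1 - hl)) < r.
  by move=> hw; apply: (ua_lt H) => //; apply: le_lt_trans (hQw w hw) crho.
have wE' : w = (hl - 1) + z by rewrite wE; ring.
split.
- move=> hz1 hz2.
  have aw : abs w = abs z by rewrite wE' (ua_strict H) //; lra.
  have hw : abs w <= rhat by lra.
  have aP : abs (Plam p lam w) = abs z ^+ p * p%:R.
    rewrite Plf hM (ua_X H) aw addrC (ua_strict H) ?absl //.
    rewrite hM aw absl1 -[X in _ < X]mul1r ltr_pM2r //; lra.
  have zp : abs z < p%:R * abs z ^+ p.
    have X1 : (p%:R : R)^-1 < abs z ^+ p.-1.
      by rewrite -rpow ltrXn2r //; [rewrite -lt0n -ltnS prednK // prime_gt0 | lra].
    have -> : abs z ^+ p = abs z * abs z ^+ p.-1 by rewrite -exprS prednK // prime_gt0.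
    set X := abs z ^+ p.-1 in X1 *.
    have pX : 1 < p%:R * X.
      have : p%:R * p%:R^-1 < p%:R * X by rewrite ltr_pM2l //; lra.
      by rewrite qqi.
    rewrite mulrCA ltr_pMr //; lra.
  have E : abs (Plam p lam w + (Qf w + (1 - hl))) = abs z ^+ p * p%:R.
    by rewrite addrC (ua_strict H) // aP; have := rest hw; lra.
  by rewrite E mulrC; split => //; lra.
- move=> hz.
  have aw : abs w <= r by rewrite wE' (ua_le H) //; lra.
  have hw : abs w <= rhat by lra.
  apply: (ua_le H); last by apply: ltW; apply: rest.
  rewrite Plf hM (ua_X H).
  have -> : r = r ^+ p * p%:R by rewrite rp -mulrA mulVf ?mulr1 //; apply/eqP; lra.
  apply: ler_pM; rewrite ?exprn_ge0 ?h0 //; first by apply: lerXn2r; rewrite ?nnegrE ?h0 //; lra.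
  apply: (ua_le H); rewrite ?absl //.
  rewrite hM absl1 -[X in _ <= X]mul1r ler_pM2r; lra.
- move=> hz.
  have ahl : abs hl = 1.
    have -> : hl = (hl - 1) + 1 by ring.
    by rewrite (ua_strict H) ?(ua_1 H) //; lra.
  have aw1 : abs w = 1.
    have -> : w = ((z - 1) + (hl - 1)) + 1 by rewrite wE; ring.
    rewrite (ua_strict H) ?(ua_1 H) //; apply: (ua_lt H) => //; lra.
  have EE : Plam p lam w + (Qf w + (1 - hl)) - 1 =
      (Plam p lam w - Plam p lam hl) + (Qf w - Qf hl) + (Qstar p Qf lam hl - hl).
    by rewrite /Qstar; ring.
  rewrite EE hfp subrr addr0 {EE}.
  have [E1|nz] := eqVneq z 1.
    have -> : w = hl by rewrite wE E1; ring.
    by rewrite E1 !subrr addr0 (ua_0 H) mulr0.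
  have d0 : 0 < abs (z - 1).
    rewrite lt_def h0 andbT; apply/eqP => /heq0/eqP; rewrite subr_eq0.
    by apply/negP.
  have whz : w - hl = z - 1 by rewrite wE; ring.
  have EP : Plam p lam w - Plam p lam hl =
      (-(lam / p%:R)) * ((w - hl) * w ^+ p + (hl - 1) * (w ^+ p - hl ^+ p))
      + (w ^+ p.+1 - hl ^+ p.+1).
    by rewrite /Plam !exprS; ring.
  have G : abs ((w - hl) * w ^+ p + (hl - 1) * (w ^+ p - hl ^+ p)) = abs (z - 1).
    rewrite (addrC ((w - hl) * w ^+ p)) (ua_strict H) hM. rewrite (ua_X H) aw1 expr1n mulr1 whz //.
    rewrite !hM (ua_X H) aw1 expr1n mulr1 whz.
    apply: (le_lt_trans (y := abs (hl - 1) * abs (z - 1))).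
      apply: ler_wpM2l; first exact: h0.
      by rewrite -whz; apply: (ua_XB H); lra.
    by rewrite gtr_pMl //; lra.
  have pd : abs (z - 1) < p%:R * abs (z - 1) by rewrite ltr_pMl //; lra.
  rewrite EP -addrA addrC (ua_strict H) ?hM ?(ua_N H) ?absl ?G //.
  apply: (ua_lt H).
    apply: (le_lt_trans _ pd); rewrite -whz; apply: (ua_XB H); lra.
  apply: (le_lt_trans (y := c * abs (z - 1))).
    rewrite -whz; apply: (Q_diff R K abs a c _ _ w hl H) => //; try lra; apply: hQ; lra.
  rewrite ltr_pM2r //; apply: (lt_trans crho); rewrite -/r; lra.
- move=> hz1 hz2.
  have aw : abs w = abs z by rewrite wE' (ua_strict H) //; lra.
  have hw : abs w <= rhat by lra.
  have aP : abs (Plam p lam w) = p%:R * abs z ^+ p.+1.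
    rewrite Plf hM (ua_X H) aw (ua_strict H).
      by rewrite hM aw absl1 exprS; ring.
    rewrite absl hM aw absl1 -[X in X < _]mul1r ltr_pM2r //; lra.
  have zp : 1 < p%:R * abs z ^+ p.+1.
    have : 1 <= abs z ^+ p.+1 by apply: exprn_ege1; lra.
    move=> Y1; have : p%:R <= p%:R * abs z ^+ p.+1 by apply: ler_peMr => //; lra.
    lra.
  by rewrite addrC (ua_strict H) // aP; have := rest hw; lra.
Qed.
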